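(* Let $n\in\mathbb{N}$, let $p$ be a prime with $p\nmid n$, and let $q\ge1$ be an integer. Then \[ \frac{M_q(pn)}{\tau(pn)}\le\frac{M_q(n)}{\tau(n)}+\frac{1}{\tau(n)}\sum_{\substack{a+b=q\\ 1\le b\le q/2}}\binom{q}{a}\int_{\mathbb{R}}\Delta(n;u)^a\,\Delta(n;u-\log p)^b\,du, \] where the sum runs over integers $a,b$. Moreover, $M_q(pn)/\tau(pn)\ge M_q(n)/\tau(n)$.
   Context: For $n\in\mathbb{N}$ and $u\in\mathbb{R}$, $\Delta(n;u)=\#\{d\mid n: e^u<d\le e^{u+1}\}$; $M_q(n)=\int_{\mathbb{R}}\Delta(n;u)^q\,du$; $\tau(n)$ is the number of divisors of $n$. *)

(* Defs.v *)
From HB Require Import structures.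
From mathcomp Require Import all_boot all_order all_algebra.
From mathcomp Require Import all_classical all_reals all_analysis.
Set Implicit Arguments. Unset Strict Implicit. Unset Printing Implicit Defensive.
Import Order.TTheory GRing.Theory Num.Theory.
Local Open Scope ring_scope.

Definition Delta (R : realType) (n : nat) (u : R) : nat :=
  size [seq d <- divisors n | (expR u < d%:R) && (d%:R <= expR (u + 1))].

Definition tau (n : nat) : nat := size (divisors n).

Definition Mq (R : realType) (q n : nat) : \bar R :=
  (\int[@lebesgue_measure R]_(u in [set: R]) ((Delta n u)%:R ^+ q : R)%:E)%E.

(* Main.v *)
Require Import Defs.
From HB Require Import structures.
From mathcomp Require Import all_boot all_order all_algebra.
From mathcomp Require Import all_classical all_reals all_analysis.
From mathcomp Require Import ring lra zify measurable_realfun measurable_fun_approximation.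
Import Order.TTheory GRing.Theory Num.Theory.
Local Open Scope ring_scope.

Section NatPart.
Local Open Scope nat_scope.
Lemma divisors_pn p n : 0 < n -> prime p -> ~~ (p %| n) ->
  perm_eq (divisors (p * n)) (divisors n ++ map (muln p) (divisors n)).
Proof.
move=> n0 pp pn.
have p0 : 0 < p by apply: prime_gt0.
have pn0 : 0 < p * n by rewrite muln_gt0 p0.
apply: uniq_perm.
- exact: divisors_uniq.
- rewrite cat_uniq divisors_uniq /=; apply/andP; split.
    apply/hasPn => x /mapP [e]; rewrite -dvdn_divisors // => en ->.
    rewrite -dvdn_divisors //; apply/negP => pen.
    by move/negP: pn; apply; apply: dvdn_trans pen; apply: dvdn_mulr.
  rewrite map_inj_in_uniq ?divisors_uniq // => x y _ _ /eqP.
  by rewrite eqn_pmul2l // => /eqP.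
move=> d; rewrite mem_cat -!dvdn_divisors //.
apply/idP/idP.
  move=> dpn; case pd: (p %| d).
    apply/orP; right; apply/mapP; exists (d %/ p); last by rewrite mulnC divnK.
    by rewrite -dvdn_divisors // -(dvdn_pmul2l p0) [p * (d %/ p)]mulnC divnK.
  apply/orP; left.
  have cdp : coprime d p by rewrite coprime_sym prime_coprime // pd.
  by rewrite -(Gauss_dvdl n cdp) mulnC.
case/orP.
  by move=> dn; apply: dvdn_mull.
move/mapP => [e]; rewrite -dvdn_divisors // => en ->.
by rewrite dvdn_pmul2l.
Qed.

Lemma divisors_rev n : 0 < n -> perm_eq (divisors n) (map (fun d => n %/ d) (divisors n)).
Proof.
move=> n0; apply: uniq_perm.
- exact: divisors_uniq.
- rewrite map_inj_in_uniq; first exact: divisors_uniq.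
  move=> x y.
  rewrite -!(dvdn_divisors _ n0) => xn yn e.
  have x0 : 0 < x by apply: dvdn_gt0 xn.
  have y0 : 0 < y by apply: dvdn_gt0 yn.
  have : n %/ x * x = n %/ y * y by rewrite !divnK.
  rewrite e => /eqP; rewrite eqn_pmul2l; first by move/eqP.
  by rewrite divn_gt0 // dvdn_leq.
move=> d; apply/idP/idP.
  rewrite -dvdn_divisors // => dn; apply/mapP; exists (n %/ d).
    by rewrite -dvdn_divisors // dvdn_div.
  have d0 : 0 < d by apply: dvdn_gt0 dn.
  rewrite -{1}(divnK dn) mulKn //.
  by rewrite divn_gt0 // dvdn_leq.
move/mapP => [e]; rewrite -!dvdn_divisors // => en ->.
exact: dvdn_div.
Qed.
End NatPart.

Section RealPart.
Context {R : realType}.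
Local Notation mu := (@lebesgue_measure R).
Local Open Scope classical_set_scope.

Lemma aff_mf (s c : R) : measurable_fun setT (fun x : R => s * x + c).
Proof. by apply: measurable_realfun.measurable_funD => //; apply: measurable_realfun.measurable_funM. Qed.
Lemma shift_measure (c : R) (A : set R) : measurable A ->
  pushforward mu ((fun x : R => 1 * x + c) : _ -> measurableTypeR R) A = mu A.
Proof.
move=> mA; apply/esym/lebesgue_measure_unique => //.
  exact: aff_mf.
move=> mf0 _ [[a b]] _ <-.
rewrite /= /pushforward /=.
have -> : (fun x : R => 1 * x + c) @^-1` `]a, b] = `](a - c), (b - c)]%classic.
  by apply/seteqP; split => x /=; rewrite !in_itv /= mul1r ltrBlDr lerBrDr.
rewrite !lebesgue_measure_itv/= !lte_fin ltrD2r.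
by case: ifP => // _; rewrite -!EFinD; congr EFin; lra.
Qed.

Lemma refl_measure (c : R) (A : set R) : measurable A ->
  pushforward mu ((fun x : R => -1 * x + c) : _ -> measurableTypeR R) A = mu A.
Proof.
move=> mA; apply/esym/lebesgue_measure_unique => //.
  exact: aff_mf.
move=> mf0 _ [[a b]] _ <-.
rewrite /= /pushforward /=.
have -> : (fun x : R => -1 * x + c) @^-1` `]a, b] = `[(c - b), (c - a)[%classic.
  apply/seteqP; split => x /=; rewrite !in_itv /= mulN1r.
    by move=> /andP[h1 h2]; apply/andP; split; lra.
  by move=> /andP[h1 h2]; apply/andP; split; lra.
rewrite !lebesgue_measure_itv/= !lte_fin ltrD2l ltrN2.
by case: ifP => // _; rewrite -!EFinD; congr EFin; lra.
Qed.

Lemma integral_aff (s c : R) (f : R -> \bar R) : (s = 1 \/ s = -1) ->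
  measurable_fun setT f -> (forall x, (0 <= f x)%E) ->
  (\int[mu]_(x in setT) f x = \int[mu]_(x in setT) f (s * x + c)%R)%E.
Proof.
move=> hs mf f0.
have mf1 := aff_mf s c.
have := @ge0_integral_pushforward _ _ (measurableTypeR R) (measurableTypeR R) R (fun x : R => s * x + c) mf1 mu setT f measurableT mf (fun x _ => f0 x).
rewrite preimage_setT => <-.
apply: eq_measure_integral => A mA _ /=.
by case: hs => ->; [rewrite shift_measure | rewrite refl_measure].
Qed.

Definition Pd (u : R) (d : nat) : bool := (expR u < d%:R) && (d%:R <= expR (u + 1)).

Lemma Delta_count n u : Delta n u = count (Pd u) (divisors n).
Proof. by rewrite /Delta size_filter. Qed.

Lemma Delta_pn (n p : nat) (u : R) : (0 < n)%N -> prime p -> ~~ (p %| n)%N ->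
  Delta (p * n) u = (Delta n u + Delta n (u - ln (p%:R : R)))%N.
Proof.
move=> n0 pp pn; rewrite !Delta_count (permP (@divisors_pn p n n0 pp pn)) count_cat count_map.
congr addn; apply: eq_count => d /=.
have p0 : (0 : R) < p%:R by rewrite ltr0n prime_gt0.
rewrite /Pd (_ : u - ln p%:R + 1 = (u + 1) - ln p%:R); last by rewrite addrAC.
rewrite !expRB lnK ?posrE // natrM ltr_pdivrMr // ler_pdivlMr //.
by rewrite [d%:R * _]mulrC.
Qed.

Lemma tau_pn (n p : nat) : (0 < n)%N -> prime p -> ~~ (p %| n)%N ->
  tau (p * n) = (2 * tau n)%N.
Proof.
move=> n0 pp pn; rewrite /tau (perm_size (@divisors_pn p n n0 pp pn)) size_cat size_map.
by rewrite mul2n addnn.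
Qed.

Lemma Delta_refl n (v : R) : (0 < n)%N ->
  (forall d, d \in divisors n -> expR v != d%:R /\ expR (v + 1) != d%:R) ->
  Delta n (ln (n%:R : R) - 1 - v) = Delta n v.
Proof.
move=> n0 hv; rewrite !Delta_count (permP (@divisors_rev n n0)) count_map.
apply: eq_in_count => d dn /=.
have [h0 h1] := hv d dn.
move: dn; rewrite -dvdn_divisors // => dn.
have d0 : (0 < d)%N by apply: dvdn_gt0 dn.
have dR : (0 : R) < d%:R by rewrite ltr0n.
have nR : (0 : R) < n%:R by rewrite ltr0n.
rewrite /Pd natr_div // ?unitfE ?gt_eqF //.
rewrite (_ : ln n%:R - 1 - v = ln n%:R - (v + 1)); last by lra.
rewrite (_ : ln n%:R - (v + 1) + 1 = ln n%:R - v); last by lra.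
rewrite !expRB lnK ?posrE //.
rewrite ltr_pM2l // ler_pM2l // ltf_pV2 ?posrE ?expR_gt0 // lef_pV2 ?posrE ?expR_gt0 //.
rewrite andbC [d%:R < _]lt_neqAle [expR v < _]lt_neqAle h0 eq_sym h1.
by []. Qed.

Lemma measurable_Delta n : measurable_fun setT (fun u : R => (Delta n u)%:R : R).
Proof.
have -> : (fun u : R => (Delta n u)%:R : R) =
    (fun u => \sum_(d <- divisors n) (if Pd u d then 1 else 0 : R)).
  apply/funext => u; rewrite Delta_count -sum1_count natr_sum big_mkcond /=.
  by apply: eq_bigr => d _; case: ifP.
apply: measurable_sum => d.
apply: measurable_fun_if => //.
- apply: measurable_and.
    by apply: measurable_fun_ltr => //; apply: measurable_expR.
  apply: measurable_fun_ler => //.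
  apply: measurableT_comp; first exact: measurable_expR.
  by apply: measurable_realfun.measurable_funD.
Qed.

Definition FF n (L : R) (a b : nat) (u : R) : R :=
  (Delta n u)%:R ^+ a * (Delta n (u - L))%:R ^+ b.

Lemma FF_ge0 n L a b u : 0 <= FF n L a b u.
Proof. by rewrite /FF mulr_ge0 // exprn_ge0. Qed.

Lemma measurable_FF n L a b : measurable_fun setT (FF n L a b).
Proof.
apply: measurable_realfun.measurable_funM; apply: measurable_funX.
  exact: measurable_Delta.
apply: (measurableT_comp (measurable_Delta n)).
by apply: measurable_realfun.measurable_funD.
Qed.

Lemma measurable_FFE n L a b : measurable_fun setT (fun u => (FF n L a b u)%:E).
Proof. by apply/measurable_EFinP; exact: measurable_FF. Qed.

Lemma measurable_seq (s : seq R) : measurable [set` s].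
Proof.
elim: s => [|a s ih].
  by rewrite (_ : [set` [::]] = set0) //; apply/seteqP; split => x.
rewrite (_ : [set` a :: s] = [set a] `|` [set` s]).
  by apply: measurableU => //; exact: measurable_set1.
apply/seteqP; split => x /=; rewrite inE.
  by case/orP => [/eqP ->|]; [left|right].
by case => [->|->]; rewrite ?eqxx ?orbT.
Qed.

Lemma ae_seq (s : seq R) (f g : R -> \bar R) :
  (forall x, x \notin s -> f x = g x) -> ae_eq mu setT f g.
Proof.
move=> h; exists [set` s]; split.
- exact: measurable_seq.
- apply: countable_lebesgue_measure0; apply: finite_set_countable; exact: finite_seq.
- move=> x /= hx; apply/negPn/negP => xs; apply: hx => _; exact: h.
Qed.

Definition bad n : seq R :=
  [seq ln (d%:R : R) | d <- divisors n] ++ [seq ln (d%:R : R) - 1 | d <- divisors n].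

Lemma bad_ok n v : (0 < n)%N -> v \notin bad n ->
  forall d, d \in divisors n -> expR v != d%:R /\ expR (v + 1) != d%:R.
Proof.
move=> n0 hv d dn.
split; apply/eqP => e; move/negP: hv; apply; rewrite mem_cat; apply/orP; [left|right];
  apply/mapP; exists d => //; rewrite -e expRK //; lra.
Qed.

Lemma I_sym n L a b : (0 < n)%N ->
  (\int[mu]_(u in setT) (FF n L a b u)%:E = \int[mu]_(u in setT) (FF n L b a u)%:E)%E.
Proof.
move=> n0.
rewrite (@integral_aff (-1) (ln (n%:R : R) - 1 + L) (fun u => (FF n L a b u)%:E)); last 3 first.
- by right.
- exact: measurable_FFE.
- by move=> x; rewrite lee_fin FF_ge0.
apply: ae_eq_integral => //.
- apply: (measurableT_comp (measurable_FFE n L a b)); exact: aff_mf.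
- exact: measurable_FFE.
apply: (@ae_seq (bad n ++ [seq x + L | x <- bad n])) => x hx.
rewrite mem_cat negb_or in hx; case/andP: hx => hx1 hx2.
have hx3 : x - L \notin bad n.
  apply/negP => h; move/negP: hx2; apply; apply/mapP; exists (x - L) => //.
  by rewrite subrK.
rewrite /FF [X in X%:E = _]mulrC; congr (_%:E); congr (_ * _); congr (_%:R ^+ _).
  rewrite -(@Delta_refl n _ n0 (@bad_ok n _ n0 hx1)); congr Delta; lra.
rewrite -(@Delta_refl n _ n0 (@bad_ok n _ n0 hx3)); congr Delta; lra.
Qed.

Lemma I_shift n L q :
  (\int[mu]_(u in setT) (FF n L 0 q u)%:E = \int[mu]_(u in setT) (FF n L q 0 u)%:E)%E.
Proof.
rewrite (@integral_aff 1 L (fun u => (FF n L 0 q u)%:E)); last 3 first.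
- by left.
- exact: measurable_FFE.
- by move=> x; rewrite lee_fin FF_ge0.
apply: eq_integral => u _; rewrite /FF !expr0 mul1r mulr1 mul1r addrK.
by [].
Qed.

Lemma Mq_pn n p q : (0 < n)%N -> prime p -> ~~ (p %| n)%N ->
  Mq R q (p * n) = (\sum_(0 <= k < q.+1) ('C(q, k)%:R : R)%:E *
     \int[mu]_(u in setT) (FF n (ln (p%:R : R)) (q - k) k u)%:E)%E.
Proof.
move=> n0 pp pn; rewrite /Mq.
transitivity (\int[mu]_(u in setT)
   (\sum_(0 <= k < q.+1) (('C(q, k)%:R : R) * FF n (ln (p%:R : R)) (q - k) k u)%:E))%E.
  apply: eq_integral => u _; rewrite Delta_pn // natrD exprDn sumEFin big_mkord.
  by congr EFin; apply: eq_bigr => k _; rewrite -mulr_natl.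
rewrite ge0_integral_sum //; last 2 first.
- move=> k; apply/measurable_EFinP; apply: measurable_realfun.measurable_funM.
    exact: measurable_cst.
  exact: measurable_FF.
- by move=> k u _; rewrite lee_fin mulr_ge0 // FF_ge0.
apply: eq_bigr => k _. under eq_integral do rewrite EFinM. rewrite ge0_integralZl_EFin //. - by move=> u _; rewrite lee_fin FF_ge0.
- exact: measurable_FFE.
Qed.

Lemma sym_sum (T : nat -> \bar R) q : (forall k, (0 <= T k)%E) ->
  (forall k, (k <= q)%N -> T k = T (q - k)%N) ->
  (\sum_(0 <= k < q.+1) T k <= \sum_(0 <= k < (q./2).+1) T k + \sum_(0 <= k < (q./2).+1) T k)%E.
Proof.
move=> T0 Ts.
pose G k := if (k <= q./2)%N then T k else 0%E.
have G0 k : (0 <= G k)%E by rewrite /G; case: ifP.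
have hq : (odd q + q./2 * 2 = q)%N by rewrite muln2 odd_double_half.
have eqG : (\sum_(0 <= k < q.+1) G k = \sum_(0 <= k < (q./2).+1) T k)%E.
  rewrite (@big_cat_nat _ _ _ (q./2).+1) //=; last by lia.
  rewrite [X in (_ + X)%E](_ : _ = 0%E); last first.
    rewrite big_nat_cond big1 // => k /andP[/andP[hk _] _].
    by rewrite /G; case: ifP => //; lia.
  rewrite adde0; apply: eq_big_nat => k /andP[_ hk].
  by rewrite /G; case: ifP => //; lia.
have eqG2 : (\sum_(0 <= k < q.+1) G (q - k)%N = \sum_(0 <= k < q.+1) G k)%E.
  rewrite [RHS]big_nat_rev; apply: eq_big_nat => k _.
  by rewrite add0n subSS.
apply: (@le_trans _ _ (\sum_(0 <= k < q.+1) (G k + G (q - k)%N))%E).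
  rewrite big_nat_cond [X in (_ <= X)%E]big_nat_cond.
  apply: lee_sum => k /andP[/andP[_ hk] _].
  rewrite /G; case: ifP => h1.
    by apply: leeDl; case: ifP.
  have h2 : (q - k <= q./2)%N by lia.
  by rewrite h2 add0e Ts //; lia.
by rewrite big_split /= eqG2 eqG.
Qed.

End RealPart.

Theorem mainTheorem10 (R : realType) (n p q : nat) :
  (0 < n)%N -> prime p -> ~~ (p %| n)%N -> (1 <= q)%N ->
  ((Mq R q (p * n) * ((tau (p * n))%:R^-1 : R)%:E
      <= Mq R q n * ((tau n)%:R^-1 : R)%:E
         + ((tau n)%:R^-1 : R)%:E *
           \sum_(1 <= b < (q./2).+1)
             (('C(q, q - b))%:R : R)%:E *
             \int[@lebesgue_measure R]_(u in [set: R])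
               (((Delta n u)%:R ^+ (q - b) *
                 (Delta n (u - ln (p%:R : R)))%:R ^+ b : R)%:E))
   /\
   Mq R q n * ((tau n)%:R^-1 : R)%:E
      <= Mq R q (p * n) * ((tau (p * n))%:R^-1 : R)%:E)%E.
Proof.
move=> n0 pp pn q1.
set L := ln (p%:R : R).
pose I a b := (\int[@lebesgue_measure R]_(u in [set: R]) (@FF R n L a b u)%:E)%E.
pose T k := ((('C(q, k))%:R : R)%:E * I (q - k)%N k)%E.
have I0 a b : (0 <= I a b)%E.
  by apply: integral_ge0 => u _; rewrite lee_fin FF_ge0.
have T0 k : (0 <= T k)%E by rewrite /T mule_ge0 // lee_fin ler0n.
have Ts k : (k <= q)%N -> T k = T (q - k)%N.
  move=> kq; rewrite /T bin_sub // subKn //; congr (_ * _)%E.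
  exact: I_sym.
have hM : Mq R q n = T 0%N.
  rewrite /T bin0 mul1e subn0 /I /Mq; apply: eq_integral => u _.
  by rewrite /FF expr0 mulr1.
have hMpn : Mq R q (p * n) = (\sum_(0 <= k < q.+1) T k)%E by rewrite Mq_pn.
have hS : (\sum_(1 <= b < (q./2).+1)
             (('C(q, q - b))%:R : R)%:E *
             \int[@lebesgue_measure R]_(u in [set: R])
               (((Delta n u)%:R ^+ (q - b) *
                 (Delta n (u - ln (p%:R : R)))%:R ^+ b : R)%:E) =
          \sum_(1 <= b < (q./2).+1) T b)%E.
  apply: eq_big_nat => b /andP[_ hb].
  rewrite /T bin_sub //; last by lia.
set S := (\sum_(1 <= b < (q./2).+1) T b)%E.
have S0 : (0 <= S)%E by apply: sume_ge0 => b _.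
have up : (Mq R q (p * n) <= (T 0%N + S) + (T 0%N + S))%E.
  rewrite hMpn -big_ltn //; exact: sym_sum.
have low : (T 0%N + T 0%N <= Mq R q (p * n))%E.
  have Tq : T q = T 0%N by rewrite (Ts 0%N) // subn0.
  rewrite hMpn big_nat_recr //= big_ltn //= Tq.
  rewrite leeD2r //; apply: leeDl; exact: sume_ge0.
have tpos : (0 : R) < (tau n)%:R.
  by rewrite ltr0n /tau lt0n size_eq0; apply/eqP => h; move: (divisor1 n); rewrite h.
rewrite (@tau_pn n p n0 pp pn) natrM.
set t := (tau n)%:R : R.
have rr : (((2%:R * t)^-1)%:E + ((2%:R * t)^-1)%:E = (t^-1)%:E :> \bar R)%E.
  by rewrite -EFinD; congr EFin; field; rewrite gt_eqF.
have r0 : (0 <= ((2%:R * t)^-1)%:E :> \bar R)%E by rewrite lee_fin invr_ge0 mulr_ge0 // ltW.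
have key x : (0 <= x)%E -> ((x + x) * ((2%:R * t)^-1)%:E = x * (t^-1)%:E)%E.
  by move=> x0; rewrite ge0_muleDl // -ge0_muleDr // rr.
split.
  apply: (le_trans (lee_wpmul2r r0 up)).
  rewrite key ?adde_ge0 // ge0_muleDl // hM hS [(S * _)%E]muleC.
  by [].
rewrite hM -key //.
by apply: lee_wpmul2r.
Qed.
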